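(* Assume $0<\nu<1$, $\mathbf{x}_E(t_0)\neq \mathbf{x}_P(t_0)$, and fix $\delta>0$. Let the pursuer use the feedback law $$\mathbf{v}_P(t)=\frac{\mathbf{z}_P(t)}{\|\mathbf{z}_P(t)\|},\qquad \mathbf{z}_P(t)=\big(R_{\mathcal C}-R_{\mathcal A}(t)\big)\frac{\mathbf{r}(t)}{\|\mathbf{r}(t)\|}+\nu\,\mathbf{y}(t).$$ Then, for every admissible evader control $\mathbf{v}_E(\cdot)$ with $\|\mathbf{v}_E(t)\|\le\nu$: (i) this law is well defined (i.e. $\mathbf{z}_P(t)\neq 0$) up to capture, and $\mathcal A(t)$ is contained in the interior $\mathcal C^\circ$ of $\mathcal C$ for all $t>t_0$ up to capture; (ii) capture ($\mathbf{x}_P(t)=\mathbf{x}_E(t)$) occurs at some finite time $t_{\rm capture}\le t_0+2(1+\nu^{-1})R_{\mathcal C}\ln(R_{\mathcal C}/\delta)$.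
   Context: Setting (simple-motion pursuit–evasion in the plane). An evader and a pursuer have positions $\mathbf{x}_E(t),\mathbf{x}_P(t)\in\mathbb R^2$ with dynamics $\dot{\mathbf{x}}_E=\mathbf{v}_E$, $\dot{\mathbf{x}}_P=\mathbf{v}_P$, where the controls satisfy $\|\mathbf{v}_E\|\le\nu$ and $\|\mathbf{v}_P\|\le 1$ with $0\le\nu<1$. The game starts at time $t_0$ and terminates at capture, i.e. the first time $\mathbf{x}_P=\mathbf{x}_E$. Set $\alpha=1/(1-\nu^2)$, $\gamma=\nu\alpha$, $\beta=\nu^2\alpha$, $\mathbf{r}(t)=\mathbf{x}_E(t)-\mathbf{x}_P(t)$. The Apollonius disc at time $t$ is the closed disc $\mathcal A(t)=\{\mathbf{x}:\|\mathbf{x}-\mathbf{x}_{\mathcal A}(t)\|\le R_{\mathcal A}(t)\}$ with center $\mathbf{x}_{\mathcal A}(t)=\alpha\mathbf{x}_E(t)-\beta\mathbf{x}_P(t)$ and radius $R_{\mathcal A}(t)=\gamma\|\mathbf{r}(t)\|$. Given $\delta>0$, $\mathcal C$ is the fixed closed disc with center $\mathbf{x}_{\mathcal C}=\mathbf{x}_{\mathcal A}(t_0)$ and radius $R_{\mathcal C}=R_{\mathcal A}(t_0)+\delta$, and $\mathbf{y}(t)=\mathbf{x}_{\mathcal A}(t)-\mathbf{x}_{\mathcal C}$. *)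

(* Defs.v *)
From Stdlib Require Import Reals.
Open Scope R_scope.

Definition vec : Type := (R * R)%type.

Definition vadd (u v : vec) : vec := (fst u + fst v, snd u + snd v).
Definition vsub (u v : vec) : vec := (fst u - fst v, snd u - snd v).
Definition vscale (a : R) (u : vec) : vec := (a * fst u, a * snd u).
Definition vzero : vec := (0, 0).
Definition vnorm (u : vec) : R := sqrt (fst u ^ 2 + snd u ^ 2).

Definition cdisc (c : vec) (rho : R) : vec -> Prop :=
  fun x => vnorm (vsub x c) <= rho.

Definition interior2 (S : vec -> Prop) : vec -> Prop :=
  fun x => exists eps, 0 < eps /\ forall w, vnorm (vsub w x) < eps -> S w.

Definition subset2 (S T : vec -> Prop) : Prop := forall x, S x -> T x.

Definition alpha (nu : R) : R := 1 / (1 - nu ^ 2).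
Definition gamma (nu : R) : R := nu * alpha nu.
Definition beta (nu : R) : R := nu ^ 2 * alpha nu.

Definition rvec (xE xP : R -> vec) (t : R) : vec := vsub (xE t) (xP t).

Definition xA (nu : R) (xE xP : R -> vec) (t : R) : vec :=
  vsub (vscale (alpha nu) (xE t)) (vscale (beta nu) (xP t)).
Definition RA (nu : R) (xE xP : R -> vec) (t : R) : R :=
  gamma nu * vnorm (rvec xE xP t).
Definition Adisc (nu : R) (xE xP : R -> vec) (t : R) : vec -> Prop :=
  cdisc (xA nu xE xP t) (RA nu xE xP t).

Definition xC (nu t0 : R) (xE xP : R -> vec) : vec := xA nu xE xP t0.
Definition RC (nu delta t0 : R) (xE xP : R -> vec) : R := RA nu xE xP t0 + delta.
Definition Cdisc (nu delta t0 : R) (xE xP : R -> vec) : vec -> Prop :=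
  cdisc (xC nu t0 xE xP) (RC nu delta t0 xE xP).

Definition yvec (nu t0 : R) (xE xP : R -> vec) (t : R) : vec :=
  vsub (xA nu xE xP t) (xC nu t0 xE xP).

Definition zP (nu delta t0 : R) (xE xP : R -> vec) (t : R) : vec :=
  vadd (vscale ((RC nu delta t0 xE xP - RA nu xE xP t) / vnorm (rvec xE xP t))
               (rvec xE xP t))
       (vscale nu (yvec nu t0 xE xP t)).

Definition vP (nu delta t0 : R) (xE xP : R -> vec) (t : R) : vec :=
  vscale (/ vnorm (zP nu delta t0 xE xP t)) (zP nu delta t0 xE xP t).

Definition has_vderiv (x : R -> vec) (t : R) (v : vec) : Prop :=
  derivable_pt_lim (fun s => fst (x s)) t (fst v) /\
  derivable_pt_lim (fun s => snd (x s)) t (snd v).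

Definition right_cont_at (x : R -> vec) (t0 : R) : Prop :=
  forall eps, 0 < eps -> exists d, 0 < d /\
    forall s, t0 <= s < t0 + d -> vnorm (vsub (x s) (x t0)) < eps.

(* Trajectory generated by an admissible evader control
   (measurable, ||v_E|| <= nu) on [t0, +oo): exactly the nu-Lipschitz curves. *)
Definition evader_admissible (nu t0 : R) (xE : R -> vec) : Prop :=
  forall s t, t0 <= s -> t0 <= t -> vnorm (vsub (xE t) (xE s)) <= nu * Rabs (t - s).

(* Main.v *)
Require Import Defs.
From Stdlib Require Import Reals Lra Psatz Classical.
Open Scope R_scope.

Lemma sqrt_le_sq (S c : R) : 0 <= c -> S <= c^2 -> sqrt S <= c.
Proof.
  intros Hc HS. destruct (Rle_lt_dec S 0) as [H|H].
  - rewrite sqrt_neg_0 by lra. lra.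
  - rewrite <- (sqrt_pow2 c Hc). apply sqrt_le_1; lra.
Qed.

Lemma sqrt_sq_ge (S c : R) : 0 <= S -> c^2 <= S -> c <= sqrt S.
Proof.
  intros HS Hc. destruct (Rle_lt_dec c 0) as [H|H].
  - pose proof (sqrt_pos S); lra.
  - rewrite <- (sqrt_pow2 c) by lra. apply sqrt_le_1; nra.
Qed.

Lemma sqrt_sq_eq (S : R) : 0 <= S -> (sqrt S)^2 = S.
Proof. intros; simpl; rewrite Rmult_1_r; apply sqrt_sqrt; auto. Qed.

Lemma cs2 (x1 x2 y1 y2 : R) :
  x1*y1 + x2*y2 <= sqrt (x1^2+x2^2) * sqrt (y1^2+y2^2).
Proof.
  rewrite <- sqrt_mult by nra.
  apply sqrt_sq_ge. nra. pose proof (pow2_ge_0 (x1*y2-x2*y1)). nra.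
Qed.

Lemma abs_le_norm1 (x1 x2 : R) : Rabs x1 <= sqrt (x1^2+x2^2).
Proof. apply sqrt_sq_ge. nra. rewrite (pow2_abs x1). nra. Qed.

Lemma abs_le_norm2 (x1 x2 : R) : Rabs x2 <= sqrt (x1^2+x2^2).
Proof. apply sqrt_sq_ge. nra. rewrite (pow2_abs x2). nra. Qed.

Lemma sqrt_lin_bound (rho S X : R) : 0 < rho -> rho^2 = S -> 0 <= S + X ->
  sqrt (S + X) <= rho + X / (2*rho).
Proof.
  intros Hr HS HX. apply sqrt_le_sq.
  - assert (X >= - rho^2) by lra.
    assert (X/(2*rho) >= - rho/2).
    { apply Rle_ge. apply (Rmult_le_reg_r (2*rho)). lra. field_simplify; nra. }
    lra.
  - replace ((rho + X/(2*rho))^2) with (rho^2 + X + (X/(2*rho))^2) by (field; lra).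
    pose proof (pow2_ge_0 (X/(2*rho))). lra.
Qed.

Lemma sq_le_cancel (x y : R) : 0 <= y -> x^2 <= y^2 -> x <= y.
Proof. intros Hy H. destruct (Rle_lt_dec x y); auto.
  assert (0 < x - y) by lra. assert (0 < x + y) by lra.
  assert (0 < (x-y)*(x+y)) by (apply Rmult_lt_0_compat; auto). nra. Qed.

Lemma dini_alg (nu al be ga RC rho r1 r2 y1 y2 de1 de2 dp1 dp2 h th
   a z1 z2 zn v1 v2 : R) :
  0 < nu < 1 -> al * (1 - nu^2) = 1 -> ga = nu * al -> be = nu^2 * al ->
  0 < rho -> rho^2 = r1^2 + r2^2 ->
  a = RC - ga*rho -> 0 < a -> y1^2 + y2^2 < a^2 ->
  0 < h -> 0 <= th <= 1 ->
  de1^2 + de2^2 <= (nu*h)^2 ->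
  z1 = a/rho*r1 + nu*y1 -> z2 = a/rho*r2 + nu*y2 ->
  zn = sqrt (z1^2+z2^2) -> v1 = /zn * z1 -> v2 = /zn * z2 ->
  Rabs (dp1 - h*v1) <= th*h -> Rabs (dp2 - h*v2) <= th*h ->
  (RC - ga * sqrt ((r1 + de1 - dp1)^2 + (r2 + de2 - dp2)^2))^2
     - ((y1 + al*de1 - be*dp1)^2 + (y2 + al*de2 - be*dp2)^2)
  >= (a^2 - (y1^2+y2^2)) * (1 + nu/((1+nu)*RC) * h)
     - h * (8*ga*RC*th + h*(14*a*ga/rho + 2*al^2 + 12*be^2)).
Proof.
  intros Hnu Hal Hga Hbe Hrho Hrr Ha Ha0 Hya Hh Hth Hde Hz1 Hz2 Hzn Hv1 Hv2 Hq1 Hq2.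
  assert (Hnu2 : 0 < 1 - nu^2) by nra.
  assert (Hal0 : 0 < al) by (destruct (Rle_lt_dec al 0); [nra|lra]).
  assert (Hga0 : 0 < ga) by nra.
  assert (Hbe0 : 0 < be) by nra.
  assert (HgaRC : ga * (1 - nu^2) = nu) by nra.
  assert (HaRC : a <= RC) by nra.
  set (dr1 := de1 - dp1). set (dr2 := de2 - dp2).
  set (X := 2*(r1*dr1 + r2*dr2) + (dr1^2+dr2^2)).
  assert (Hrho' : sqrt ((r1 + de1 - dp1)^2 + (r2 + de2 - dp2)^2) <= rho + X/(2*rho)).
  { replace ((r1 + de1 - dp1)^2 + (r2 + de2 - dp2)^2) with ((r1^2+r2^2) + X)
      by (unfold X, dr1, dr2; ring).
    apply sqrt_lin_bound; auto. unfold X. pose proof (pow2_ge_0 (r1+dr1)). pose proof (pow2_ge_0 (r2+dr2)). nra. }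
  set (rho' := sqrt ((r1 + de1 - dp1)^2 + (r2 + de2 - dp2)^2)) in *.
  assert (HA : (RC - ga*rho')^2 >= a^2 - a*ga*X/rho).
  { assert (E: (RC - ga*rho')^2 = (a - ga*(rho'-rho))^2) by (rewrite Ha; ring).
    rewrite E.
    assert (a*ga*(rho' - rho) <= a*ga*(X/(2*rho))).
    { apply Rmult_le_compat_l. nra. lra. }
    assert (a*ga*X/rho = 2*(a*ga*(X/(2*rho)))) by (field; lra).
    pose proof (pow2_ge_0 (ga*(rho'-rho))). nra. }
  assert (HY : (y1 + al*de1 - be*dp1)^2 + (y2 + al*de2 - be*dp2)^2
     = (y1^2+y2^2) + 2*(y1*(al*de1-be*dp1) + y2*(al*de2-be*dp2))
       + ((al*de1-be*dp1)^2 + (al*de2-be*dp2)^2)) by ring.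
  rewrite HY.
  set (u1 := a*nu/rho*r1 + y1). set (u2 := a*nu/rho*r2 + y2).
  set (un := sqrt (u1^2+u2^2)).
  set (yn := sqrt (y1^2+y2^2)).
  assert (HL : - (a*ga*(2*(r1*dr1+r2*dr2))/rho) - 2*(y1*(al*de1-be*dp1) + y2*(al*de2-be*dp2))
     = -2*al*(de1*u1+de2*u2) + 2*ga*(dp1*z1+dp2*z2)).
  { unfold u1, u2, dr1, dr2. rewrite Hz1, Hz2, Hga, Hbe. field. lra. }
  assert (Hyn0 : 0 <= yn) by apply sqrt_pos.
  assert (Hyn2 : yn^2 = y1^2+y2^2) by (apply sqrt_sq_eq; nra).
  assert (Hyna : yn < a) by nra.
  assert (Hrn : sqrt (r1^2+r2^2) = rho).
  { rewrite <- Hrr. apply sqrt_pow2. lra. }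
  assert (Hry : r1*y1 + r2*y2 <= rho*yn).
  { pose proof (cs2 r1 r2 y1 y2). rewrite Hrn in H. exact H. }
  assert (Hzz : z1^2+z2^2 = a^2 + 2*a*nu/rho*(r1*y1+r2*y2) + nu^2*yn^2).
  { rewrite Hz1, Hz2, Hyn2.
    replace ((a / rho * r1 + nu * y1) ^ 2 + (a / rho * r2 + nu * y2) ^ 2)
      with (a^2/rho^2*(r1^2+r2^2) + 2*a*nu/rho*(r1*y1+r2*y2) + nu^2*(y1^2+y2^2))
      by (field; lra).
    rewrite <- Hrr. field. lra. }
  assert (Huu : u1^2+u2^2 = a^2*nu^2 + 2*a*nu/rho*(r1*y1+r2*y2) + yn^2).
  { unfold u1, u2. rewrite Hyn2.
    replace ((a*nu / rho * r1 + y1) ^ 2 + (a*nu / rho * r2 + y2) ^ 2)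
      with (a^2*nu^2/rho^2*(r1^2+r2^2) + 2*a*nu/rho*(r1*y1+r2*y2) + (y1^2+y2^2))
      by (field; lra).
    rewrite <- Hrr. field. lra. }
  assert (Hry' : 2*a*nu/rho*(r1*y1+r2*y2) <= 2*a*nu*yn).
  {
    assert (0 <= 2*a*nu/rho) by (apply Rmult_le_pos; [nra| left; apply Rinv_0_lt_compat; lra]).
    assert ((2*a*nu/rho)*(r1*y1+r2*y2) <= (2*a*nu/rho)*(rho*yn)) by (apply Rmult_le_compat_l; auto).
    assert ((2*a*nu/rho)*(rho*yn) = 2*a*nu*yn) by (field; lra). lra. }
  assert (Hzn0 : 0 <= zn) by (rewrite Hzn; apply sqrt_pos).
  assert (Hzn2 : zn^2 = z1^2+z2^2) by (rewrite Hzn; apply sqrt_sq_eq; nra).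
  assert (Hun0 : 0 <= un) by apply sqrt_pos.
  assert (Hun2 : un^2 = u1^2+u2^2) by (apply sqrt_sq_eq; nra).
  assert (Hzle : zn <= a + nu*yn).
  { assert (zn^2 <= (a+nu*yn)^2) by nra.
    apply sq_le_cancel; auto. nra. }
  assert (Hule : un <= a*nu + yn).
  { assert (un^2 <= (a*nu+yn)^2) by nra.
    apply sq_le_cancel; auto. nra. }
  assert (Hdiff : zn^2 - un^2 = (1-nu^2)*(a^2 - yn^2)) by (rewrite Hzn2, Hun2, Hzz, Huu; ring).
  assert (HV : 0 < a^2 - yn^2) by nra.
  assert (Hzu : un < zn) by nra.
  assert (Hsum : zn + un <= 2*(1+nu)*RC) by nra.
  assert (Hzu2 : zn - un >= (1-nu^2)*(a^2-yn^2)/(2*(1+nu)*RC)).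
  { apply Rle_ge. apply (Rmult_le_reg_r (2*(1+nu)*RC)). nra.
    replace ((1 - nu ^ 2) * (a ^ 2 - yn ^ 2) / (2 * (1 + nu) * RC) * (2 * (1 + nu) * RC))
      with ((1 - nu ^ 2) * (a ^ 2 - yn ^ 2)) by (field; nra).
    nra. }
  assert (Hk : 2*ga*h*(zn-un) >= (a^2 - yn^2) * (nu/((1+nu)*RC)) * h).
  { assert (2*ga*h*((1-nu^2)*(a^2-yn^2)/(2*(1+nu)*RC)) = (a^2 - yn^2) * (nu/((1+nu)*RC)) * h).
    { assert (E: nu/((1+nu)*RC) = ga*(1-nu^2)/((1+nu)*RC)) by (rewrite HgaRC; reflexivity).
      rewrite E. field. split; lra. }
    assert (2*ga*h*(zn-un) >= 2*ga*h*((1-nu^2)*(a^2-yn^2)/(2*(1+nu)*RC))) by (apply Rmult_ge_compat_l; nra). lra. }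
  assert (Hden : sqrt (de1^2+de2^2) <= nu*h) by (apply sqrt_le_sq; nra).
  assert (Hdeu : de1*u1+de2*u2 <= nu*h*un).
  { pose proof (cs2 de1 de2 u1 u2). pose proof (sqrt_pos (de1^2+de2^2)). fold un in H. nra. }
  assert (Hzpos : 0 < zn) by lra.
  assert (Hvz : v1*z1+v2*z2 = zn).
  { rewrite Hv1, Hv2. replace (/ zn * z1 * z1 + / zn * z2 * z2) with ((z1^2+z2^2)/zn) by (field; lra).
    rewrite <- Hzn2. field. lra. }
  assert (Hvv : v1^2+v2^2 = 1).
  { rewrite Hv1, Hv2. replace ((/ zn * z1)^2 + (/ zn * z2)^2) with ((z1^2+z2^2)/zn^2) by (field; lra).
    rewrite <- Hzn2. field. lra. }
  set (q1 := dp1 - h*v1) in *. set (q2 := dp2 - h*v2) in *.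
  assert (Hz1a : Rabs z1 <= zn) by (rewrite Hzn; apply abs_le_norm1).
  assert (Hz2a : Rabs z2 <= zn) by (rewrite Hzn; apply abs_le_norm2).
  assert (Hqz : q1*z1 + q2*z2 >= - (2*th*h*zn)).
  { assert (Rabs (q1*z1) <= th*h*zn).
    { rewrite Rabs_mult. apply Rmult_le_compat; auto using Rabs_pos. }
    assert (Rabs (q2*z2) <= th*h*zn).
    { rewrite Rabs_mult. apply Rmult_le_compat; auto using Rabs_pos. }
    apply Rle_ge.
    assert (-(th*h*zn) <= q1*z1) by (pose proof (Rle_abs (-(q1*z1))); rewrite Rabs_Ropp in H1; lra).
    assert (-(th*h*zn) <= q2*z2) by (pose proof (Rle_abs (-(q2*z2))); rewrite Rabs_Ropp in H2; lra).
    lra. }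
  assert (Hdpz : dp1*z1+dp2*z2 = h*zn + (q1*z1+q2*z2)).
  { unfold q1, q2. rewrite <- Hvz. ring. }
  assert (Hq1s : q1^2 <= (th*h)^2).
  { rewrite <- (pow2_abs q1). pose proof (Rabs_pos q1). apply pow_incr. split; lra. }
  assert (Hq2s : q2^2 <= (th*h)^2).
  { rewrite <- (pow2_abs q2). pose proof (Rabs_pos q2). apply pow_incr. split; lra. }
  assert (Hdp : dp1^2+dp2^2 <= 6*h^2).
  { replace dp1 with (h*v1+q1) by (unfold q1; ring).
    replace dp2 with (h*v2+q2) by (unfold q2; ring).
    pose proof (pow2_ge_0 (h*v1-q1)). pose proof (pow2_ge_0 (h*v2-q2)).
    assert (E : (h*v1+q1)^2 + (h*v2+q2)^2 = 2*h^2*(v1^2+v2^2) + 2*(q1^2+q2^2) - (h*v1-q1)^2 - (h*v2-q2)^2) by ring.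
    rewrite Hvv in E.
    assert (th^2 <= 1) by (clear -Hth; nra).
    assert ((th*h)^2 <= h^2) by (rewrite Rpow_mult_distr; pose proof (pow2_ge_0 h);
       replace (h^2) with (1*h^2) at 2 by ring; apply Rmult_le_compat_r; lra).
    lra. }
  assert (Hde' : de1^2+de2^2 <= h^2).
  { assert ((nu*h)^2 <= h^2) by (rewrite Rpow_mult_distr; pose proof (pow2_ge_0 h);
       replace (h^2) with (1*h^2) at 2 by ring; apply Rmult_le_compat_r; [lra|clear -Hnu; nra]).
    lra. }
  assert (Hdr : dr1^2 + dr2^2 <= 14*h^2).
  { unfold dr1, dr2. pose proof (pow2_ge_0 (de1+dp1)). pose proof (pow2_ge_0 (de2+dp2)).
    assert (E : (de1-dp1)^2 + (de2-dp2)^2 = 2*(de1^2+de2^2) + 2*(dp1^2+dp2^2) - (de1+dp1)^2 - (de2+dp2)^2) by ring.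
    lra. }
  assert (Hdy : (al*de1-be*dp1)^2 + (al*de2-be*dp2)^2 <= (2*al^2 + 12*be^2)*h^2).
  { pose proof (pow2_ge_0 (al*de1+be*dp1)). pose proof (pow2_ge_0 (al*de2+be*dp2)).
    assert (E : (al*de1-be*dp1)^2 + (al*de2-be*dp2)^2 = 2*al^2*(de1^2+de2^2) + 2*be^2*(dp1^2+dp2^2) - (al*de1+be*dp1)^2 - (al*de2+be*dp2)^2) by ring.
    assert (al^2*(de1^2+de2^2) <= al^2*h^2) by (apply Rmult_le_compat_l; [apply pow2_ge_0|lra]).
    assert (be^2*(dp1^2+dp2^2) <= be^2*(6*h^2)) by (apply Rmult_le_compat_l; [apply pow2_ge_0|lra]).
    lra. }
  assert (HQ1 : a*ga*(dr1^2+dr2^2)/rho <= 14*a*ga/rho*h^2).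
  { unfold Rdiv. assert (0 <= a*ga*/rho).
    { apply Rmult_le_pos; [|left; apply Rinv_0_lt_compat; lra]. apply Rmult_le_pos; lra. }
    replace (a * ga * (dr1 ^ 2 + dr2 ^ 2) * / rho) with ((a*ga*/rho)*(dr1^2+dr2^2)) by ring.
    replace (14 * a * ga * / rho * h ^ 2) with ((a*ga*/rho)*(14*h^2)) by ring.
    apply Rmult_le_compat_l; auto. }
  assert (HXsplit : a*ga*X/rho = a*ga*(2*(r1*dr1+r2*dr2))/rho + a*ga*(dr1^2+dr2^2)/rho)
    by (unfold X; field; lra).
  assert (Hzn2RC : zn <= 2*RC).
  { assert (nu*yn <= yn) by (replace yn with (1*yn) at 2 by ring; apply Rmult_le_compat_r; lra). lra. }
  assert (Hthz : 4*ga*th*h*zn <= 8*ga*RC*th*h).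
  { assert (0 <= 4*ga*th*h) by (repeat apply Rmult_le_pos; lra).
    replace (8*ga*RC*th*h) with ((4*ga*th*h)*(2*RC)) by ring.
    apply Rmult_le_compat_l; auto. }
  assert (F1 : -2*al*(de1*u1+de2*u2) >= -2*ga*h*un).
  { assert (al*(de1*u1+de2*u2) <= al*(nu*h*un)) by (apply Rmult_le_compat_l; lra).
    rewrite Hga. lra. }
  assert (F2 : 2*ga*(dp1*z1+dp2*z2) >= 2*ga*h*zn - 4*ga*th*h*zn).
  { rewrite Hdpz. assert (ga*(q1*z1+q2*z2) >= ga*(-(2*th*h*zn))) by (apply Rmult_ge_compat_l; lra).
    lra. }
  rewrite <- Hyn2.
  lra.
Qed.

Lemma real_ind (a b : R) (P : R -> Prop) :
  a <= b ->
  (forall t, a <= t < b -> (forall s, a <= s <= t -> P s) ->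
     exists eta, 0 < eta /\ forall s, t < s < t + eta -> s <= b -> P s) ->
  (forall t, a <= t <= b -> (forall s, a <= s < t -> P s) -> P t) ->
  forall t, a <= t <= b -> P t.
Proof.
  intros Hab Hstep Hclos.
  set (E := fun x => a <= x <= b /\ forall s, a <= s <= x -> P s).
  assert (Pa : P a) by (apply Hclos; [lra| intros; lra]).
  assert (Hb : bound E) by (exists b; intros x [Hx _]; lra).
  assert (Hne : exists x, E x) by (exists a; split; [lra| intros s Hs; replace s with a by lra; auto]).
  destruct (completeness E Hb Hne) as [m [Hub Hlub]].
  assert (Ham : a <= m) by (apply Hub; split; [lra| intros s Hs; replace s with a by lra; auto]).
  assert (Hmb : m <= b) by (apply Hlub; intros x [Hx _]; lra).
  assert (Hbelow : forall s, a <= s < m -> P s).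
  { intros s Hs. apply NNPP. intro HnP.
    assert (is_upper_bound E s).
    { intros x [Hx Hxp]. destruct (Rle_lt_dec x s); auto. exfalso; apply HnP, Hxp; lra. }
    specialize (Hlub s H). lra. }
  assert (Pm : P m) by (apply Hclos; auto).
  assert (Em : E m) by (split; [lra| intros s Hs; destruct (Req_dec s m); [subst; auto| apply Hbelow; lra]]).
  destruct (Req_dec m b) as [Hmb'|Hmb'].
  - intros t Ht. apply (proj2 Em). lra.
  - exfalso. assert (Hmb2 : m < b) by lra. destruct (Hstep m (conj Ham Hmb2) (proj2 Em)) as [eta [Heta Hs]].
    set (m' := Rmin (m + eta/2) b).
    assert (E m').
    { split. unfold m'; split; [apply Rmin_glb; lra | apply Rmin_r].
      intros s Hs'. destruct (Rle_lt_dec s m). apply (proj2 Em); lra.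
      apply Hs. split. lra. assert (m' <= m + eta/2) by apply Rmin_l. lra.
      assert (m' <= b) by apply Rmin_r. lra. }
    specialize (Hub m' H).
    assert (m < m') by (unfold m'; apply Rmin_glb_lt; lra). lra.
Qed.

Definition ctn (f : R -> R) (x : R) : Prop :=
  forall eps, 0 < eps -> exists d, 0 < d /\ forall s, Rabs (s - x) < d -> Rabs (f s - f x) < eps.

Lemma ctn_pt (f : R -> R) (x : R) : ctn f x <-> continuity_pt f x.
Proof.
  split.
  - intros H eps Heps. destruct (H eps Heps) as [d [Hd Hs]]. exists d; split; [lra|].
    intros y [_ Hy]. simpl in *. unfold R_dist in *. apply Hs; auto.
  - intros H eps Heps. destruct (H eps Heps) as [d [Hd Hs]]. exists d; split; [lra|].
    intros s Hs'. destruct (Req_dec s x) as [->|Hne].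
    + replace (f x - f x) with 0 by ring. rewrite Rabs_R0; lra.
    + apply (Hs s). split. split; [exact I| auto]. exact Hs'.
Qed.

Lemma cont_plus f g x : continuity_pt f x -> continuity_pt g x -> continuity_pt (fun s => f s + g s) x.
Proof. intros; apply (continuity_pt_plus f g); auto. Qed.
Lemma cont_minus f g x : continuity_pt f x -> continuity_pt g x -> continuity_pt (fun s => f s - g s) x.
Proof. intros; apply (continuity_pt_minus f g); auto. Qed.
Lemma cont_mult f g x : continuity_pt f x -> continuity_pt g x -> continuity_pt (fun s => f s * g s) x.
Proof. intros; apply (continuity_pt_mult f g); auto. Qed.
Lemma cont_opp f x : continuity_pt f x -> continuity_pt (fun s => - f s) x.
Proof. intros; apply (continuity_pt_opp f); auto. Qed.
Lemma cont_const c x : continuity_pt (fun _ => c) x.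
Proof. apply continuity_pt_const. intros a b; reflexivity. Qed.
Lemma cont_id x : continuity_pt (fun s => s) x.
Proof. apply derivable_continuous_pt, derivable_pt_id. Qed.
Lemma cont_pow2 f x : continuity_pt f x -> continuity_pt (fun s => f s ^ 2) x.
Proof. intros H. apply (cont_mult f (fun s => f s * 1)). auto. apply cont_mult; auto. apply cont_const. Qed.
Lemma cont_sqrt f x : continuity_pt f x -> 0 <= f x -> continuity_pt (fun s => sqrt (f s)) x.
Proof. intros H Hp. apply (continuity_pt_comp f sqrt). auto. apply continuity_pt_sqrt; auto. Qed.
Lemma cont_exp f x : continuity_pt f x -> continuity_pt (fun s => exp (f s)) x.
Proof. intros H. apply (continuity_pt_comp f exp). auto. apply derivable_continuous_pt, derivable_pt_exp. Qed.

Lemma ctn_pos f x : continuity_pt f x -> 0 < f x -> exists d, 0 < d /\ forall s, Rabs (s - x) < d -> 0 < f s.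
Proof.
  intros H Hp. apply ctn_pt in H. destruct (H (f x / 2)) as [d [Hd Hs]]. lra.
  exists d; split; auto. intros s Hs'. specialize (Hs s Hs'). apply Rabs_def2 in Hs. lra.
Qed.

Lemma ctn_closed_left f a x : a < x -> continuity_pt f x -> (forall s, a <= s < x -> 0 <= f s) -> 0 <= f x.
Proof.
  intros Hax H Hs. apply ctn_pt in H. destruct (Rle_lt_dec 0 (f x)) as [|Hneg]; auto.
  destruct (H (- f x / 2)) as [d [Hd Hd']]. lra.
  set (s := Rmax a (x - d/2)).
  assert (a <= s) by apply Rmax_l. assert (x - d/2 <= s) by apply Rmax_r.
  assert (s < x) by (unfold s; apply Rmax_lub_lt; lra).
  specialize (Hd' s). assert (Rabs (s - x) < d) by (rewrite Rabs_left; lra).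
  specialize (Hd' H3). apply Rabs_def2 in Hd'. specialize (Hs s (conj H0 H2)). lra.
Qed.

Definition aa nu delta t0 xE xP t := RC nu delta t0 xE xP - RA nu xE xP t.
Definition Vf nu delta t0 xE xP t :=
  (aa nu delta t0 xE xP t)^2 - ((fst (yvec nu t0 xE xP t))^2 + (snd (yvec nu t0 xE xP t))^2).
Definition kk nu delta t0 xE xP := nu / ((1+nu) * RC nu delta t0 xE xP).
Definition Wf nu delta t0 xE xP t :=
  Vf nu delta t0 xE xP t * exp (- (kk nu delta t0 xE xP * (t - t0))).

Lemma vnorm_fst u : Rabs (fst u) <= vnorm u.
Proof. apply abs_le_norm1. Qed.
Lemma vnorm_snd u : Rabs (snd u) <= vnorm u.
Proof. apply abs_le_norm2. Qed.
Lemma vnorm_pos u : 0 <= vnorm u.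
Proof. apply sqrt_pos. Qed.
Lemma vnorm_sq u : (vnorm u)^2 = fst u ^2 + snd u ^2.
Proof. apply sqrt_sq_eq. nra. Qed.
Lemma vnorm_zero u : vnorm u = 0 -> u = vzero.
Proof.
  intros H. destruct u as [a b]. unfold vnorm in H; simpl in H.
  apply sqrt_eq_0 in H; [|nra]. unfold vzero. f_equal; nra.
Qed.

Lemma Rmax_lip t0 s t : Rabs (Rmax t0 s - Rmax t0 t) <= Rabs (s - t).
Proof.
  pose proof (Rle_abs (s-t)). pose proof (Rle_abs (-(s-t))). rewrite Rabs_Ropp in H0.
  apply Rabs_le. unfold Rmax. destruct (Rle_dec t0 s), (Rle_dec t0 t); split; lra.
Qed.

Lemma cont_Rmax t0 t : continuity_pt (fun s => Rmax t0 s) t.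
Proof.
  apply ctn_pt. intros eps He. exists eps; split; auto. intros s Hs.
  pose proof (Rmax_lip t0 s t). lra.
Qed.

Lemma adm_comp nu t0 xE s t : evader_admissible nu t0 xE -> t0 <= s -> t0 <= t ->
  Rabs (fst (xE s) - fst (xE t)) <= nu * Rabs (s - t) /\
  Rabs (snd (xE s) - snd (xE t)) <= nu * Rabs (s - t).
Proof.
  intros H Hs Ht. specialize (H t s Ht Hs).
  pose proof (vnorm_fst (vsub (xE s) (xE t))). pose proof (vnorm_snd (vsub (xE s) (xE t))).
  simpl in *. lra.
Qed.

Lemma contE nu t0 xE t : 0 < nu -> evader_admissible nu t0 xE ->
  continuity_pt (fun s => fst (xE (Rmax t0 s))) t /\
  continuity_pt (fun s => snd (xE (Rmax t0 s))) t.
Proof.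
  intros Hnu H. split; apply ctn_pt; intros eps He; exists (eps/nu); split;
    try (apply Rdiv_lt_0_compat; auto); intros s Hs;
    destruct (adm_comp nu t0 xE (Rmax t0 s) (Rmax t0 t) H (Rmax_l _ _) (Rmax_l _ _)) as [H1 H2];
    pose proof (Rmax_lip t0 s t);
    assert (nu * Rabs (s - t) < eps) by (apply (Rmult_lt_reg_r (/nu)); [apply Rinv_0_lt_compat; lra|];
       replace (nu * Rabs (s - t) * / nu) with (Rabs (s-t)) by (field; lra); exact Hs);
    assert (nu * Rabs (Rmax t0 s - Rmax t0 t) <= nu * Rabs (s-t)) by (apply Rmult_le_compat_l; lra);
    lra.
Qed.

Lemma contP nu delta t0 xE xP t : t0 <= t -> right_cont_at xP t0 ->
  (t0 < t -> has_vderiv xP t (vP nu delta t0 xE xP t)) ->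
  continuity_pt (fun s => fst (xP (Rmax t0 s))) t /\
  continuity_pt (fun s => snd (xP (Rmax t0 s))) t.
Proof.
  intros Ht Hrc Hd. destruct (Req_dec t t0) as [->|Hne].
  - split; apply ctn_pt; intros eps He; destruct (Hrc eps He) as [d [Hd0 Hdd]];
    exists d; split; auto; intros s Hs;
    (rewrite (Rmax_left t0 t0) by lra);
    (destruct (Rle_lt_dec s t0);
     [ rewrite Rmax_left by lra; rewrite Rminus_diag, Rabs_R0; lra
     | rewrite Rmax_right by lra;
       assert (t0 <= s < t0 + d) by (split; [lra|]; apply Rabs_def2 in Hs; lra);
       specialize (Hdd s H);
       pose proof (vnorm_fst (vsub (xP s) (xP t0))); pose proof (vnorm_snd (vsub (xP s) (xP t0)));
       simpl in *; lra ]).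
  - assert (Hlt : t0 < t) by lra. destruct (Hd Hlt) as [D1 D2].
    assert (C1 := derivable_continuous_pt _ _ (exist _ _ D1)).
    assert (C2 := derivable_continuous_pt _ _ (exist _ _ D2)).
    split; apply ctn_pt;
    [apply ctn_pt in C1; rename C1 into C | apply ctn_pt in C2; rename C2 into C];
    intros eps He; destruct (C eps He) as [d [Hd0 Hdd]];
    exists (Rmin d (t - t0)); split; try (apply Rmin_glb_lt; lra);
    intros s Hs; assert (Hs1 : Rabs (s - t) < d) by (pose proof (Rmin_l d (t-t0)); lra);
    assert (t0 < s) by (pose proof (Rmin_r d (t-t0)); apply Rabs_def2 in Hs; lra);
    rewrite (Rmax_right t0 s) by lra; rewrite (Rmax_right t0 t) by lra; apply Hdd; auto.
Qed.

Ltac cont_tac :=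
  repeat (first [ apply cont_const
                | assumption
                | apply cont_minus | apply cont_plus | apply cont_opp | apply cont_mult | apply cont_pow2
                | apply cont_exp
                | apply cont_Rmax
                | (apply cont_sqrt; [ | apply Rplus_le_le_0_compat; apply pow2_ge_0]) ]).

Lemma contAW nu delta t0 xE xP t :
  continuity_pt (fun s => fst (xE (Rmax t0 s))) t ->
  continuity_pt (fun s => snd (xE (Rmax t0 s))) t ->
  continuity_pt (fun s => fst (xP (Rmax t0 s))) t ->
  continuity_pt (fun s => snd (xP (Rmax t0 s))) t ->
  continuity_pt (fun s => aa nu delta t0 xE xP (Rmax t0 s)) t /\
  continuity_pt (fun s => Wf nu delta t0 xE xP (Rmax t0 s)) t.
Proof.
  intros H1 H2 H3 H4.
  unfold Wf, Vf, aa, RA, rvec, yvec, xC, xA, vnorm, vsub, vscale, kk. cbn [fst snd].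
  split.
  - cont_tac.
  - cont_tac.
Qed.

Lemma W_step (V V' k h e1 E : R) : 0 < V -> 0 < k -> 0 < h -> 0 < e1 -> 0 < E <= 1 ->
  V' >= V*(1+k*h) - e1*h ->
  V' * (E * exp (-(k*h))) >= V*E - h*(k^2*h*V + e1).
Proof.
  intros HV Hk Hh He HE HV'.
  set (Eh := exp (-(k*h))).
  assert (H1 : 1 - k*h <= Eh) by (pose proof (exp_ineq1_le (-(k*h))); unfold Eh; lra).
  assert (H2 : Eh <= 1) by (unfold Eh; rewrite <- exp_0; left; apply exp_increasing; nra).
  assert (H3 : 0 < Eh) by apply exp_pos.
  assert (A1 : V' * Eh >= (V*(1+k*h) - e1*h) * Eh) by (apply Rmult_ge_compat_r; lra).
  assert (A2 : V*(1+k*h)*Eh >= V*(1+k*h)*(1-k*h)).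
  { apply Rle_ge, Rmult_le_compat_l; [|lra]. apply Rmult_le_pos; nra. }
  assert (A3 : e1*h*Eh <= e1*h) by (rewrite <- (Rmult_1_r (e1*h)) at 2; apply Rmult_le_compat_l; nra).
  assert (A4 : V'*Eh >= V - (k^2*h*V + e1)*h) by nra.
  replace (V' * (E * Eh)) with (E * (V'*Eh)) by ring.
  assert (A5 : E * (V'*Eh) >= E*(V - (k^2*h*V + e1)*h)) by (apply Rmult_ge_compat_l; lra).
  assert (A6 : E*((k^2*h*V + e1)*h) <= (k^2*h*V + e1)*h).
  { rewrite <- (Rmult_1_l ((k^2*h*V + e1)*h)) at 2. apply Rmult_le_compat_r; [|lra].
    apply Rmult_le_pos; [|lra]. assert (0 <= k^2*h*V) by (repeat apply Rmult_le_pos; nra). lra. }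
  nra.
Qed.

Lemma Vf_shift nu delta t0 xE xP t h :
  Vf nu delta t0 xE xP (t+h) =
  (RC nu delta t0 xE xP - gamma nu * sqrt ((fst (rvec xE xP t) + (fst (xE (t+h)) - fst (xE t)) - (fst (xP (t+h)) - fst (xP t)))^2
        + (snd (rvec xE xP t) + (snd (xE (t+h)) - snd (xE t)) - (snd (xP (t+h)) - snd (xP t)))^2))^2
  - ((fst (yvec nu t0 xE xP t) + alpha nu * (fst (xE (t+h)) - fst (xE t)) - beta nu * (fst (xP (t+h)) - fst (xP t)))^2
     + (snd (yvec nu t0 xE xP t) + alpha nu * (snd (xE (t+h)) - snd (xE t)) - beta nu * (snd (xP (t+h)) - snd (xP t)))^2).
Proof.
  unfold Vf, aa, RA, rvec, yvec, xC, xA, vnorm, vsub, vscale. cbn [fst snd].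
  f_equal; [f_equal; f_equal; f_equal; f_equal; f_equal; ring | f_equal; f_equal; ring].
Qed.

Lemma dini_step nu delta t0 xE xP t :
  0 < nu < 1 -> 0 < delta -> evader_admissible nu t0 xE -> t0 < t ->
  has_vderiv xP t (vP nu delta t0 xE xP t) ->
  0 < vnorm (rvec xE xP t) -> 0 < aa nu delta t0 xE xP t -> 0 < Vf nu delta t0 xE xP t ->
  forall eps, 0 < eps -> exists etaa, 0 < etaa /\ forall h, 0 < h < etaa ->
     Wf nu delta t0 xE xP (t+h) >= Wf nu delta t0 xE xP t - eps*h.
Proof.
  intros Hnu Hdel Hadm Ht [D1 D2] Hrho Ha HV eps Heps.
  set (RCv := RC nu delta t0 xE xP).
  set (al := alpha nu). set (be := beta nu). set (ga := gamma nu).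
  assert (Hal : al * (1 - nu^2) = 1) by (unfold al, alpha; field; nra).
  assert (Hga : ga = nu * al) by reflexivity.
  assert (Hbe : be = nu^2 * al) by reflexivity.
  assert (Hnu2 : 0 < 1 - nu^2) by nra.
  assert (Hal0 : 0 < al) by (destruct (Rle_lt_dec al 0); [nra|lra]).
  assert (Hga0 : 0 < ga) by (rewrite Hga; nra).
  assert (Hbe0 : 0 < be) by (rewrite Hbe; nra).
  assert (HRC : 0 < RCv).
  { unfold RCv, RC, RA. pose proof (vnorm_pos (rvec xE xP t0)). fold ga. nra. }
  set (k := kk nu delta t0 xE xP).
  assert (Hk : 0 < k) by (unfold k, kk; apply Rdiv_lt_0_compat; fold RCv; nra).
  set (V := Vf nu delta t0 xE xP t) in *.
  set (rho := vnorm (rvec xE xP t)) in *.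
  set (a := aa nu delta t0 xE xP t) in *.
  set (M := 14*a*ga/rho + 2*al^2 + 12*be^2).
  assert (HM : 0 <= M).
  { unfold M. assert (0 <= 14*a*ga/rho) by (apply Rmult_le_pos; [nra| left; apply Rinv_0_lt_compat; lra]).
    nra. }
  set (e1 := eps/2).
  set (th := Rmin 1 (e1/(2*(8*ga*RCv+1)))).
  assert (Hth0 : 0 < th).
  { unfold th. apply Rmin_glb_lt. lra. apply Rdiv_lt_0_compat. unfold e1; lra. nra. }
  assert (Hth1 : th <= 1) by apply Rmin_l.
  assert (Hth2 : 8*ga*RCv*th <= e1/2).
  { assert (th <= e1/(2*(8*ga*RCv+1))) by apply Rmin_r.
    assert (8*ga*RCv*th <= (8*ga*RCv+1)*th) by nra.
    assert ((8*ga*RCv+1)*th <= (8*ga*RCv+1)*(e1/(2*(8*ga*RCv+1)))) by (apply Rmult_le_compat_l; nra).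
    assert ((8*ga*RCv+1)*(e1/(2*(8*ga*RCv+1))) = e1/2) by (field; nra). lra. }
  destruct (D1 th Hth0) as [d1 Hd1]. destruct (D2 th Hth0) as [d2 Hd2].
  pose (etaa := Rmin (Rmin d1 d2) (Rmin (e1/(2*(M+1))) (eps/(2*(k^2*V+1))))).
  assert (Heta : 0 < etaa).
  { unfold etaa. pose proof (cond_pos d1). pose proof (cond_pos d2).
    repeat apply Rmin_glb_lt; try lra; apply Rdiv_lt_0_compat; unfold e1; try lra; nra. }
  exists etaa. split; auto.
  intros h [Hh0 Hh]. unfold etaa in Hh.
  assert (Hhd1 : h < d1) by (pose proof (Rmin_l (Rmin d1 d2) (Rmin (e1/(2*(M+1))) (eps/(2*(k^2*V+1))))); pose proof (Rmin_l d1 d2); lra).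
  assert (Hhd2 : h < d2) by (pose proof (Rmin_l (Rmin d1 d2) (Rmin (e1/(2*(M+1))) (eps/(2*(k^2*V+1))))); pose proof (Rmin_r d1 d2); lra).
  assert (HhM : h < e1/(2*(M+1))) by (pose proof (Rmin_r (Rmin d1 d2) (Rmin (e1/(2*(M+1))) (eps/(2*(k^2*V+1))))); pose proof (Rmin_l (e1/(2*(M+1))) (eps/(2*(k^2*V+1)))); lra).
  assert (HhV : h < eps/(2*(k^2*V+1))) by (pose proof (Rmin_r (Rmin d1 d2) (Rmin (e1/(2*(M+1))) (eps/(2*(k^2*V+1))))); pose proof (Rmin_r (e1/(2*(M+1))) (eps/(2*(k^2*V+1)))); lra).
  assert (Hq : forall (f : R -> R) v d, (forall h, h <> 0 -> Rabs h < d -> Rabs ((f (t+h) - f t)/h - v) < th) ->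
             h < d -> Rabs ((f (t+h) - f t) - h*v) <= th*h).
  { intros f v d Hf Hhd. assert (Hne : h <> 0) by lra.
    assert (Rabs h < d) by (rewrite Rabs_right; lra).
    specialize (Hf h Hne H).
    replace ((f (t+h) - f t) - h*v) with (h * ((f (t+h) - f t)/h - v)) by (field; lra).
    rewrite Rabs_mult, (Rabs_right h) by lra. rewrite Rmult_comm. apply Rmult_le_compat_r; lra. }
  pose proof (Hq (fun s => fst (xP s)) _ d1 Hd1 Hhd1) as Hq1. cbn beta in Hq1.
  pose proof (Hq (fun s => snd (xP s)) _ d2 Hd2 Hhd2) as Hq2. cbn beta in Hq2.
  assert (Hde : (fst (xE (t+h)) - fst (xE t))^2 + (snd (xE (t+h)) - snd (xE t))^2 <= (nu*h)^2).
  { specialize (Hadm t (t+h) ltac:(lra) ltac:(lra)).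
    replace (t + h - t) with h in Hadm by ring. rewrite Rabs_right in Hadm by lra.
    pose proof (vnorm_sq (vsub (xE (t+h)) (xE t))). pose proof (vnorm_pos (vsub (xE (t+h)) (xE t))).
    unfold vsub in H, H0, Hadm. cbn [fst snd] in H, H0, Hadm. rewrite <- H. apply pow_incr. lra. }
  pose proof (dini_alg nu al be ga RCv rho
     (fst (rvec xE xP t)) (snd (rvec xE xP t))
     (fst (yvec nu t0 xE xP t)) (snd (yvec nu t0 xE xP t))
     (fst (xE (t+h)) - fst (xE t)) (snd (xE (t+h)) - snd (xE t))
     (fst (xP (t+h)) - fst (xP t)) (snd (xP (t+h)) - snd (xP t)) h th a
     (fst (zP nu delta t0 xE xP t)) (snd (zP nu delta t0 xE xP t))
     (vnorm (zP nu delta t0 xE xP t))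
     (fst (vP nu delta t0 xE xP t)) (snd (vP nu delta t0 xE xP t))
     Hnu Hal Hga Hbe Hrho) as HD.
  assert (Hrr : rho^2 = fst (rvec xE xP t)^2 + snd (rvec xE xP t)^2) by apply vnorm_sq.
  specialize (HD Hrr eq_refl Ha).
  assert (Hya : fst (yvec nu t0 xE xP t)^2 + snd (yvec nu t0 xE xP t)^2 < a^2).
  { unfold V, Vf in HV. fold a in HV. lra. }
  specialize (HD Hya Hh0 (conj (Rlt_le _ _ Hth0) Hth1) Hde eq_refl eq_refl eq_refl eq_refl eq_refl Hq1 Hq2).
  unfold RCv, ga, al, be in HD. rewrite <- Vf_shift in HD. fold RCv al be ga k in HD.
  change (a ^ 2 - (fst (yvec nu t0 xE xP t) ^ 2 + snd (yvec nu t0 xE xP t) ^ 2)) with V in HD.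
  fold M in HD.
  assert (HhM' : h*M <= e1/2).
  { assert (h*(M+1) <= e1/2).
    { assert (h*(M+1) < e1/(2*(M+1))*(M+1)) by (apply Rmult_lt_compat_r; lra).
      replace (e1/(2*(M+1))*(M+1)) with (e1/2) in H by (field; lra). lra. }
    nra. }
  assert (HV' : Vf nu delta t0 xE xP (t+h) >= V*(1+k*h) - e1*h).
  { assert (h*(8*ga*RCv*th + h*M) <= h*e1) by (apply Rmult_le_compat_l; lra).
    change (nu / ((1 + nu) * RCv)) with k in HD. lra. }
  assert (HE : 0 < exp (-(k*(t-t0))) <= 1).
  { split. apply exp_pos. rewrite <- exp_0. left. apply exp_increasing. nra. }
  pose proof (W_step V (Vf nu delta t0 xE xP (t+h)) k h e1 (exp (-(k*(t-t0)))) HV Hk Hh0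
     ltac:(unfold e1; lra) HE HV') as HW.
  unfold Wf. fold k. fold V.
  replace (exp (- (k * (t + h - t0)))) with (exp (- (k * (t - t0))) * exp (- (k * h)))
    by (rewrite <- exp_plus; f_equal; ring).
  assert (h*(k^2*h*V) <= h*(eps/2)).
  { apply Rmult_le_compat_l. lra.
    assert (h*(k^2*V+1) <= eps/2).
    { assert (h*(k^2*V+1) < eps/(2*(k^2*V+1))*(k^2*V+1)) by (apply Rmult_lt_compat_r; nra).
      replace (eps/(2*(k^2*V+1))*(k^2*V+1)) with (eps/2) in H by (field; nra). lra. }
    assert (0 <= k^2*V) by nra. nra. }
  unfold e1 in HW. nra.
Qed.

Lemma rho_pos xE xP t : xP t <> xE t -> 0 < vnorm (rvec xE xP t).
Proof.
  intros H. destruct (Rle_lt_dec (vnorm (rvec xE xP t)) 0) as [Hle|]; auto.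
  pose proof (vnorm_pos (rvec xE xP t)).
  assert (Hz : rvec xE xP t = vzero) by (apply vnorm_zero; lra).
  exfalso; apply H. unfold rvec, vsub, vzero in Hz. destruct (xE t) as [a b], (xP t) as [c d].
  simpl in Hz. injection Hz; intros. f_equal; lra.
Qed.

Lemma aa_t0 nu delta t0 xE xP : aa nu delta t0 xE xP t0 = delta.
Proof. unfold aa, RC. ring. Qed.

Lemma Wf_t0 nu delta t0 xE xP : Wf nu delta t0 xE xP t0 = delta^2.
Proof.
  unfold Wf, Vf. rewrite aa_t0. replace (t0 - t0) with 0 by ring.
  replace (- (kk nu delta t0 xE xP * 0)) with 0 by ring. rewrite exp_0.
  unfold yvec, xC, vsub. cbn [fst snd]. ring.
Qed.

Lemma Vf_of_Wf nu delta t0 xE xP t : 0 < Wf nu delta t0 xE xP t -> 0 < Vf nu delta t0 xE xP t.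
Proof.
  unfold Wf. intros H. pose proof (exp_pos (- (kk nu delta t0 xE xP * (t - t0)))).
  destruct (Rle_lt_dec (Vf nu delta t0 xE xP t) 0); auto.
  assert (Vf nu delta t0 xE xP t * exp (- (kk nu delta t0 xE xP * (t - t0))) <= 0).
  { assert (0 <= - Vf nu delta t0 xE xP t * exp (- (kk nu delta t0 xE xP * (t - t0)))) by (apply Rmult_le_pos; lra). lra. } lra.
Qed.

Lemma aa_of_Vf nu delta t0 xE xP t : 0 <= aa nu delta t0 xE xP t -> 0 < Vf nu delta t0 xE xP t ->
  0 < aa nu delta t0 xE xP t.
Proof.
  unfold Vf. intros H1 H2. destruct H1 as [|H1]; auto. rewrite <- H1 in H2.
  pose proof (pow2_ge_0 (fst (yvec nu t0 xE xP t))). pose proof (pow2_ge_0 (snd (yvec nu t0 xE xP t))).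
  replace (0^2) with 0 in H2 by ring. lra.
Qed.

Lemma inv_eps nu delta t0 xE xP T :
  0 < nu < 1 -> 0 < delta -> evader_admissible nu t0 xE -> right_cont_at xP t0 ->
  (forall t, t0 < t -> (forall s, t0 <= s <= t -> xP s <> xE s) -> has_vderiv xP t (vP nu delta t0 xE xP t)) ->
  t0 <= T -> (forall s, t0 <= s <= T -> xP s <> xE s) ->
  forall eps, 0 < eps -> eps * (1 + (T - t0)) < delta^2 ->
  forall t, t0 <= t <= T ->
    0 < aa nu delta t0 xE xP t /\ delta^2 - eps * (1 + (t - t0)) <= Wf nu delta t0 xE xP t.
Proof.
  intros Hnu Hdel Hadm Hrc Hder HT Hnc eps Heps HepsT.
  assert (Hderiv : forall t, t0 < t <= T -> has_vderiv xP t (vP nu delta t0 xE xP t)).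
  { intros t Ht. apply Hder. lra. intros s Hs. apply Hnc. lra. }
  assert (Hcont : forall t, t0 <= t <= T ->
     continuity_pt (fun s => aa nu delta t0 xE xP (Rmax t0 s)) t /\
     continuity_pt (fun s => Wf nu delta t0 xE xP (Rmax t0 s)) t).
  { intros t Ht. destruct (contE nu t0 xE t ltac:(lra) Hadm).
    destruct (contP nu delta t0 xE xP t ltac:(lra) Hrc ltac:(intros; apply Hderiv; lra)).
    apply contAW; auto. }
  assert (HRm : forall s, t0 <= s -> Rmax t0 s = s) by (intros; apply Rmax_right; lra).
  apply real_ind; auto.
  -
    intros t Ht HP. destruct (HP t ltac:(lra)) as [Hat HWt].
    destruct (Hcont t ltac:(lra)) as [Ca Cw].
    destruct (ctn_pos _ _ Ca) as [da [Hda Hda']]. { rewrite HRm by lra. auto. }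
    destruct (Req_dec t t0) as [->|Hne].
    + apply ctn_pt in Cw. destruct (Cw eps Heps) as [dw [Hdw Hdw']].
      exists (Rmin da dw). split; [apply Rmin_glb_lt; auto|].
      intros s Hs _. assert (Rabs (s - t0) < da /\ Rabs (s - t0) < dw).
      { pose proof (Rmin_l da dw). pose proof (Rmin_r da dw). rewrite Rabs_right by lra. split; lra. }
      destruct H as [H1 H2]. specialize (Hda' s H1). specialize (Hdw' s H2).
      rewrite (HRm s) in Hda' by lra. rewrite (HRm s) in Hdw' by lra. rewrite (HRm t0) in Hdw' by lra. rewrite Wf_t0 in Hdw'. apply Rabs_def2 in Hdw'.
      split; auto. nra.
    + assert (Hlt : t0 < t) by lra.
      assert (HVt : 0 < Vf nu delta t0 xE xP t) by (apply Vf_of_Wf; nra).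
      destruct (dini_step nu delta t0 xE xP t Hnu Hdel Hadm Hlt (Hderiv t ltac:(lra))
                 (rho_pos xE xP t (Hnc t ltac:(lra))) Hat HVt eps Heps) as [ew [Hew Hew']].
      exists (Rmin da ew). split; [apply Rmin_glb_lt; auto|].
      intros s Hs _. pose proof (Rmin_l da ew). pose proof (Rmin_r da ew).
      assert (Rabs (s - t) < da) by (rewrite Rabs_right by lra; lra).
      specialize (Hda' s H1). rewrite HRm in Hda' by lra.
      specialize (Hew' (s - t) ltac:(lra)). replace (t + (s - t)) with s in Hew' by ring.
      split; auto. nra.
  -
    intros t Ht HP. destruct (Req_dec t t0) as [->|Hne].
    + rewrite aa_t0, Wf_t0. split; [lra|]. nra.
    + assert (Hlt : t0 < t) by lra.
      destruct (Hcont t Ht) as [Ca Cw].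
      assert (Ha0 : 0 <= aa nu delta t0 xE xP t).
      { rewrite <- (HRm t) by lra. apply (ctn_closed_left _ t0 t Hlt Ca).
        intros s Hs. rewrite HRm by lra. left. apply (HP s Hs). }
      assert (HW0 : 0 <= Wf nu delta t0 xE xP t - (delta^2 - eps * (1 + (t - t0)))).
      { set (g := fun s => Wf nu delta t0 xE xP (Rmax t0 s) - (delta^2 - eps * (1 + (s - t0)))).
        replace (Wf nu delta t0 xE xP t - (delta ^ 2 - eps * (1 + (t - t0)))) with (g t)
          by (unfold g; rewrite HRm by lra; reflexivity).
        apply (ctn_closed_left g t0 t Hlt).
        - unfold g. apply cont_minus; auto. apply cont_minus. apply cont_const.
          apply cont_mult. apply cont_const. apply cont_plus. apply cont_const.
          apply cont_minus. apply cont_id. apply cont_const.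
        - intros s Hs. unfold g. rewrite HRm by lra. destruct (HP s Hs). lra. }
      assert (HVt : 0 < Vf nu delta t0 xE xP t) by (apply Vf_of_Wf; nra).
      split. apply aa_of_Vf; auto. lra.
Qed.

Lemma inv nu delta t0 xE xP T :
  0 < nu < 1 -> 0 < delta -> evader_admissible nu t0 xE -> right_cont_at xP t0 ->
  (forall t, t0 < t -> (forall s, t0 <= s <= t -> xP s <> xE s) -> has_vderiv xP t (vP nu delta t0 xE xP t)) ->
  t0 <= T -> (forall s, t0 <= s <= T -> xP s <> xE s) ->
  forall t, t0 <= t <= T ->
    0 < aa nu delta t0 xE xP t /\ delta^2 <= Wf nu delta t0 xE xP t.
Proof.
  intros Hnu Hdel Hadm Hrc Hder HT Hnc t Ht.
  set (L := 1 + (T - t0)). assert (HL : 1 <= L) by (unfold L; lra).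
  set (eps0 := delta^2 / (2*L)).
  assert (He0 : 0 < eps0) by (unfold eps0; apply Rdiv_lt_0_compat; nra).
  assert (He0L : eps0 * L < delta^2) by (unfold eps0; field_simplify; nra).
  split.
  - apply (inv_eps nu delta t0 xE xP T Hnu Hdel Hadm Hrc Hder HT Hnc eps0 He0 He0L t Ht).
  - destruct (Rle_lt_dec (delta^2) (Wf nu delta t0 xE xP t)) as [|Hlt]; auto.
    exfalso. set (W := Wf nu delta t0 xE xP t) in *.
    set (eps := Rmin eps0 ((delta^2 - W)/(2*L))).
    assert (He : 0 < eps) by (unfold eps; apply Rmin_glb_lt; auto; apply Rdiv_lt_0_compat; lra).
    assert (HeL : eps * L < delta^2) by (pose proof (Rmin_l eps0 ((delta^2 - W)/(2*L))); fold eps in H; nra).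
    destruct (inv_eps nu delta t0 xE xP T Hnu Hdel Hadm Hrc Hder HT Hnc eps He HeL t Ht) as [_ HW].
    fold W in HW.
    assert (eps * (1 + (t - t0)) <= eps * L) by (apply Rmult_le_compat_l; unfold L; lra).
    assert (eps * L <= (delta^2 - W)/2).
    { pose proof (Rmin_r eps0 ((delta^2 - W)/(2*L))). fold eps in H0.
      assert (eps * L <= (delta^2 - W)/(2*L) * L) by (apply Rmult_le_compat_r; lra).
      replace ((delta^2 - W)/(2*L) * L) with ((delta^2 - W)/2) in H1 by (field; lra). lra. }
    lra.
Qed.

Lemma exp_2ln x : 0 < x -> exp (2 * ln x) = x^2.
Proof. intros. replace (2 * ln x) with (ln x + ln x) by ring. rewrite exp_plus, exp_ln by auto. ring. Qed.

Lemma RC_gt nu delta t0 xE xP : 0 < nu < 1 -> 0 < delta -> delta <= RC nu delta t0 xE xP.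
Proof.
  intros. unfold RC, RA, gamma, alpha. pose proof (vnorm_pos (rvec xE xP t0)).
  assert (0 < 1/(1-nu^2)) by (apply Rdiv_lt_0_compat; nra).
  assert (0 <= nu * (1/(1-nu^2)) * vnorm (rvec xE xP t0)) by (repeat apply Rmult_le_pos; lra).
  set (c := nu * (1/(1-nu^2)) * vnorm (rvec xE xP t0)) in *. clearbody c. clear -H0 H3. lra.
Qed.

Lemma RC_gt_strict nu delta t0 xE xP : 0 < nu < 1 -> 0 < delta -> xE t0 <> xP t0 -> delta < RC nu delta t0 xE xP.
Proof.
  intros. unfold RC, RA, gamma, alpha. pose proof (rho_pos xE xP t0 (not_eq_sym H1)).
  assert (0 < 1/(1-nu^2)) by (apply Rdiv_lt_0_compat; nra).
  assert (0 < nu * (1/(1-nu^2)) * vnorm (rvec xE xP t0)) by (repeat apply Rmult_lt_0_compat; lra).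
  set (c := nu * (1/(1-nu^2)) * vnorm (rvec xE xP t0)) in *. clearbody c. clear -H0 H4. lra.
Qed.

Lemma time_bound nu delta t0 xE xP T :
  0 < nu < 1 -> 0 < delta -> evader_admissible nu t0 xE -> right_cont_at xP t0 ->
  (forall t, t0 < t -> (forall s, t0 <= s <= t -> xP s <> xE s) -> has_vderiv xP t (vP nu delta t0 xE xP t)) ->
  t0 <= T -> (forall s, t0 <= s <= T -> xP s <> xE s) ->
  T < t0 + 2 * (1 + / nu) * RC nu delta t0 xE xP * ln (RC nu delta t0 xE xP / delta).
Proof.
  intros Hnu Hdel Hadm Hrc Hder HT Hnc.
  destruct (inv nu delta t0 xE xP T Hnu Hdel Hadm Hrc Hder HT Hnc T ltac:(lra)) as [Ha HW].
  set (RCv := RC nu delta t0 xE xP) in *.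
  assert (HRC : delta <= RCv) by (apply RC_gt; auto).
  set (k := kk nu delta t0 xE xP).
  assert (Hk : k = nu / ((1+nu)*RCv)) by reflexivity.
  assert (Hk0 : 0 < k) by (rewrite Hk; apply Rdiv_lt_0_compat; nra).
  assert (HrhoT : 0 < vnorm (rvec xE xP T)) by (apply rho_pos; apply Hnc; lra).
  assert (HaRC : aa nu delta t0 xE xP T < RCv).
  { unfold aa, RA, gamma, alpha. fold RCv.
    assert (0 < 1/(1-nu^2)) by (apply Rdiv_lt_0_compat; nra).
    assert (0 < nu * (1/(1-nu^2)) * vnorm (rvec xE xP T)) by (repeat apply Rmult_lt_0_compat; lra).
    set (c := nu * (1/(1-nu^2)) * vnorm (rvec xE xP T)) in *. clearbody c. clear -H0. lra. }
  assert (HV : Vf nu delta t0 xE xP T < RCv^2).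
  { unfold Vf. pose proof (pow2_ge_0 (fst (yvec nu t0 xE xP T))). pose proof (pow2_ge_0 (snd (yvec nu t0 xE xP T))).
    assert (aa nu delta t0 xE xP T ^2 < RCv^2) by (clear -Ha HaRC; nra). lra. }
  unfold Wf in HW. fold k in HW.
  set (E := exp (- (k * (T - t0)))) in HW.
  assert (HE : 0 < E) by apply exp_pos.
  assert (Hprod : delta^2 < RCv^2 * E).
  { assert (Vf nu delta t0 xE xP T * E < RCv^2 * E) by (apply Rmult_lt_compat_r; auto). lra. }
  destruct (Rlt_le_dec T (t0 + 2 * (1 + / nu) * RCv * ln (RCv / delta))) as [|Hge]; auto.
  exfalso.
  assert (HkB : k * (2 * (1 + / nu) * RCv * ln (RCv / delta)) = 2 * ln (RCv/delta)).
  { rewrite Hk. field. split; lra. }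
  assert (HEle : E <= exp (- (2 * ln (RCv/delta)))).
  { unfold E. destruct (Req_dec (k*(T-t0)) (2 * ln (RCv/delta))) as [Heq|Hne].
    rewrite Heq. lra. left. apply exp_increasing.
    assert (k * (2 * (1 + / nu) * RCv * ln (RCv / delta)) <= k * (T - t0)) by (apply Rmult_le_compat_l; lra).
    lra. }
  rewrite exp_Ropp, exp_2ln in HEle by (apply Rdiv_lt_0_compat; lra).
  assert (RCv^2 * E <= RCv^2 * / (RCv/delta)^2) by (apply Rmult_le_compat_l; [nra|auto]).
  replace (RCv^2 * / (RCv/delta)^2) with (delta^2) in H by (field; lra).
  lra.
Qed.

Lemma vnorm_tri u v : vnorm (vadd u v) <= vnorm u + vnorm v.
Proof.
  unfold vnorm, vadd. cbn [fst snd]. apply sqrt_le_sq.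
  pose proof (sqrt_pos (fst u ^2 + snd u ^2)). pose proof (sqrt_pos (fst v ^2 + snd v ^2)). lra.
  pose proof (cs2 (fst u) (snd u) (fst v) (snd v)).
  assert (E1 := sqrt_sq_eq (fst u ^2 + snd u ^2) ltac:(nra)).
  assert (E2 := sqrt_sq_eq (fst v ^2 + snd v ^2) ltac:(nra)).
  nra.
Qed.

Lemma z_nonzero nu delta t0 xE xP t : 0 < nu < 1 ->
  0 < vnorm (rvec xE xP t) -> 0 < aa nu delta t0 xE xP t -> 0 < Vf nu delta t0 xE xP t ->
  zP nu delta t0 xE xP t <> vzero.
Proof.
  intros Hnu Hrho Ha HV Hz.
  set (rho := vnorm (rvec xE xP t)) in *.
  set (a := aa nu delta t0 xE xP t) in *.
  set (r1 := fst (rvec xE xP t)). set (r2 := snd (rvec xE xP t)).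
  set (y1 := fst (yvec nu t0 xE xP t)). set (y2 := snd (yvec nu t0 xE xP t)).
  assert (Hz1 : a/rho*r1 + nu*y1 = 0) by (unfold zP, vadd, vscale in Hz; injection Hz; intros; auto).
  assert (Hz2 : a/rho*r2 + nu*y2 = 0) by (unfold zP, vadd, vscale in Hz; injection Hz; intros; auto).
  assert (Hrr : rho^2 = r1^2 + r2^2) by apply vnorm_sq.
  assert (HVe : a^2 - (y1^2+y2^2) > 0) by (unfold Vf in HV; fold a y1 y2 in HV; lra).
  set (u1 := a*nu/rho*r1 + y1). set (u2 := a*nu/rho*r2 + y2).
  assert (Hid : (a/rho*r1 + nu*y1)^2 + (a/rho*r2 + nu*y2)^2 - (u1^2+u2^2) = (1-nu^2)*(a^2 - (y1^2+y2^2))).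
  { unfold u1, u2.
    replace ((a / rho * r1 + nu * y1) ^ 2 + (a / rho * r2 + nu * y2) ^ 2 -
      ((a * nu / rho * r1 + y1) ^ 2 + (a * nu / rho * r2 + y2) ^ 2))
    with ((1-nu^2)*(a^2/rho^2*(r1^2+r2^2) - (y1^2+y2^2))) by (field; lra).
    rewrite <- Hrr. field. lra. }
  rewrite Hz1, Hz2 in Hid. pose proof (pow2_ge_0 u1). pose proof (pow2_ge_0 u2).
  assert (0 < (1-nu^2)*(a^2 - (y1^2+y2^2))) by (apply Rmult_lt_0_compat; nra). nra.
Qed.

Lemma A_in_C nu delta t0 xE xP t : 0 < nu < 1 ->
  0 < aa nu delta t0 xE xP t -> 0 < Vf nu delta t0 xE xP t ->
  subset2 (Adisc nu xE xP t) (interior2 (Cdisc nu delta t0 xE xP)).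
Proof.
  intros Hnu Ha HV x Hx. unfold Adisc, cdisc in Hx.
  set (yn := vnorm (yvec nu t0 xE xP t)).
  assert (Hyn : yn < aa nu delta t0 xE xP t).
  { unfold Vf in HV. pose proof (vnorm_sq (yvec nu t0 xE xP t)). pose proof (vnorm_pos (yvec nu t0 xE xP t)).
    fold yn in H, H0. apply Rnot_le_lt. intro Hle.
    assert (aa nu delta t0 xE xP t ^2 <= yn^2) by (apply pow_incr; lra). lra. }
  assert (Hxc : vnorm (vsub x (xC nu t0 xE xP)) <= RA nu xE xP t + yn).
  { replace (vsub x (xC nu t0 xE xP)) with (vadd (vsub x (xA nu xE xP t)) (yvec nu t0 xE xP t)).
    pose proof (vnorm_tri (vsub x (xA nu xE xP t)) (yvec nu t0 xE xP t)). fold yn in H. lra.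
    unfold yvec, vadd, vsub. cbn [fst snd]. f_equal; ring. }
  assert (HRC : RA nu xE xP t + yn < RC nu delta t0 xE xP) by (unfold aa in Hyn; lra).
  exists (RC nu delta t0 xE xP - vnorm (vsub x (xC nu t0 xE xP))). split. lra.
  intros w Hw. unfold Cdisc, cdisc.
  replace (vsub w (xC nu t0 xE xP)) with (vadd (vsub w x) (vsub x (xC nu t0 xE xP)))
    by (unfold vadd, vsub; cbn [fst snd]; f_equal; ring).
  pose proof (vnorm_tri (vsub w x) (vsub x (xC nu t0 xE xP))). lra.
Qed.

Theorem theorem1 (nu delta t0 : R) (xE xP : R -> vec) :
  0 < nu < 1 ->
  0 < delta ->
  xE t0 <> xP t0 ->
  evader_admissible nu t0 xE ->
  (* closed-loop pursuer trajectory, valid up to capture *)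
  right_cont_at xP t0 ->
  (forall t, t0 < t ->
     (forall s, t0 <= s <= t -> xP s <> xE s) ->
     has_vderiv xP t (vP nu delta t0 xE xP t)) ->
  exists tc,
    t0 < tc /\
    tc <= t0 + 2 * (1 + / nu) * RC nu delta t0 xE xP
                 * ln (RC nu delta t0 xE xP / delta) /\
    xP tc = xE tc /\
    (forall t, t0 <= t < tc -> xP t <> xE t) /\
    (forall t, t0 <= t < tc -> zP nu delta t0 xE xP t <> vzero) /\
    (forall t, t0 < t < tc ->
       subset2 (Adisc nu xE xP t) (interior2 (Cdisc nu delta t0 xE xP))).
Proof.
  intros Hnu Hdel Hne Hadm Hrc Hder.
  set (B := 2 * (1 + / nu) * RC nu delta t0 xE xP * ln (RC nu delta t0 xE xP / delta)).
  assert (HRC : delta < RC nu delta t0 xE xP) by (apply RC_gt_strict; auto).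
  assert (HB : 0 < B).
  { unfold B. assert (0 < ln (RC nu delta t0 xE xP / delta)).
    { rewrite <- ln_1. apply ln_increasing. lra.
      apply (Rmult_lt_reg_r delta); auto. unfold Rdiv. rewrite Rmult_assoc, Rinv_l by lra. lra. }
    assert (0 < / nu) by (apply Rinv_0_lt_compat; lra).
    repeat apply Rmult_lt_0_compat; lra. }
  assert (Hex : exists s, t0 <= s <= t0 + B /\ xP s = xE s).
  { apply NNPP. intro Hn.
    assert (Hnc : forall s, t0 <= s <= t0 + B -> xP s <> xE s).
    { intros s Hs Heq. apply Hn. exists s. auto. }
    pose proof (time_bound nu delta t0 xE xP (t0 + B) Hnu Hdel Hadm Hrc Hder ltac:(lra) Hnc).
    fold B in H. lra. }
  set (E := fun x => t0 <= x <= t0 + B /\ forall s, t0 <= s <= x -> xP s <> xE s).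
  assert (Et0 : E t0).
  { split. lra. intros s Hs. replace s with t0 by lra. auto. }
  assert (HbE : bound E) by (exists (t0 + B); intros x [Hx _]; lra).
  destruct (completeness E HbE (ex_intro _ t0 Et0)) as [tc [Hub Hlub]].
  assert (Htc0 : t0 <= tc) by (apply Hub; auto).
  assert (HtcB : tc <= t0 + B) by (apply Hlub; intros x [Hx _]; lra).
  assert (Hbelow : forall s, t0 <= s < tc -> xP s <> xE s).
  { intros s Hs Heq. assert (is_upper_bound E s).
    { intros x [Hx Hxp]. destruct (Rle_lt_dec x s); auto. exfalso. apply (Hxp s); auto; lra. }
    specialize (Hlub s H). lra. }
  assert (Hcap : xP tc = xE tc).
  { apply NNPP. intro Hn.
    assert (Hnc : forall s, t0 <= s <= tc -> xP s <> xE s).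
    { intros s Hs. destruct (Req_dec s tc) as [->|]; auto. apply Hbelow; lra. }
    destruct (contE nu t0 xE tc ltac:(lra) Hadm) as [CE1 CE2].
    destruct (contP nu delta t0 xE xP tc Htc0 Hrc ltac:(intros; apply Hder; auto)) as [CP1 CP2].
    set (g := fun s => (fst (xE (Rmax t0 s)) - fst (xP (Rmax t0 s)))^2 + (snd (xE (Rmax t0 s)) - snd (xP (Rmax t0 s)))^2).
    assert (Cg : continuity_pt g tc) by (unfold g; cont_tac).
    assert (Hgtc : 0 < g tc).
    { unfold g. rewrite Rmax_right by lra. pose proof (rho_pos xE xP tc Hn).
      assert (E0 : vnorm (rvec xE xP tc)^2 = (fst (xE tc) - fst (xP tc))^2 + (snd (xE tc) - snd (xP tc))^2) by apply vnorm_sq.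
      rewrite <- E0. nra. }
    destruct (ctn_pos g tc Cg Hgtc) as [d [Hd Hd']].
    assert (Hafter : forall s, tc <= s < tc + d -> xP s <> xE s).
    { intros s Hs Heq. assert (Rabs (s - tc) < d) by (rewrite Rabs_right; lra).
      specialize (Hd' s H). unfold g in Hd'. rewrite Rmax_right in Hd' by lra.
      rewrite Heq in Hd'. lra. }
    destruct (Req_dec tc (t0 + B)) as [Heq|Hneq].
    - destruct Hex as [s [Hs Hs']]. destruct (Rlt_le_dec s tc).
      + apply (Hbelow s); auto; lra.
      + apply (Hnc s); auto; lra.
    - set (m := Rmin (tc + d/2) (t0 + B)).
      assert (Em : E m).
      { split. split. unfold m; apply Rmin_glb; lra. apply Rmin_r.
        intros s Hs. destruct (Rlt_le_dec s tc). apply Hbelow; lra.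
        apply Hafter. split. lra. pose proof (Rmin_l (tc + d/2) (t0 + B)). fold m in H. lra. }
      specialize (Hub m Em). assert (tc < m) by (unfold m; apply Rmin_glb_lt; lra). lra. }
  assert (Htc : t0 < tc).
  { destruct Htc0 as [|Heq]; auto. subst tc. exfalso. apply Hne. auto. }
  assert (Hinv : forall t, t0 <= t < tc ->
     0 < vnorm (rvec xE xP t) /\ 0 < aa nu delta t0 xE xP t /\ 0 < Vf nu delta t0 xE xP t).
  { intros t Ht.
    assert (Hnc : forall s, t0 <= s <= t -> xP s <> xE s) by (intros; apply Hbelow; lra).
    destruct (inv nu delta t0 xE xP t Hnu Hdel Hadm Hrc Hder ltac:(lra) Hnc t ltac:(lra)) as [Ha HW].
    split. apply rho_pos. apply Hbelow; lra. split; auto. apply Vf_of_Wf. nra. }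
  exists tc. split; [auto|]. split; [fold B; lra|]. split; [auto|]. split; [auto|]. split.
  - intros t Ht. destruct (Hinv t Ht) as [H1 [H2 H3]]. apply z_nonzero; auto.
  - intros t Ht. destruct (Hinv t ltac:(lra)) as [H1 [H2 H3]]. apply A_in_C; auto.
Qed.
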